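(* Let $\mathcal P$ be a pre-Hahn-localizable family of probability measures on $(\Omega,\mathcal F)$ with a localization $\mathcal Q$ whose supports $\{S_Q\}_{Q\in\mathcal Q}$ are pairwise disjoint. Then for every $A\in\mathcal H_{\mathcal F}^{\mathcal Q}$ and every $Q\in\mathcal Q$ we have $A\cap S_Q\in\mathcal F$.
   Context: $\mathcal A\lll\mathcal B$ means every $A\in\mathcal A$ is absolutely continuous w.r.t. some $B\in\mathcal B$; $\mathrm{sconv}$ denotes countable convex combinations. $\mathcal P$ is pre-Hahn-localizable with localization $\mathcal Q$ (probability measures on $\mathcal F$) and supports $S_Q\in\mathcal F$ if $Q(S_R)=\delta_{QR}$ for $Q,R\in\mathcal Q$ and $\mathcal Q\lll\mathcal P\lll\mathrm{sconv}(\mathcal Q)$. The Hahn-extension is $\mathcal H_{\mathcal F}^{\mathcal Q}=\sigma\big(\mathcal F\cup\{\bigcup_{Q\in\mathcal Q}E_Q:E_Q\in\mathcal F,E_Q\subseteq S_Q\}\big)$. *)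

(* Defs.v *)
From HB Require Import structures.
From mathcomp Require Import all_boot all_order all_algebra.
From mathcomp Require Import all_classical all_reals all_analysis.
Set Implicit Arguments. Unset Strict Implicit. Unset Printing Implicit Defensive.
Import Order.TTheory GRing.Theory Num.Theory.
Local Open Scope classical_set_scope.
Local Open Scope ring_scope.

(* The measurable space (Omega, F) is a measurableType T; F = measurable. *)

Definition abs_cont d (T : measurableType d) (R : realType)
  (mu nu : set T -> \bar R) : Prop :=
  forall A, measurable A -> nu A = 0%E -> mu A = 0%E.

Definition fam_abs_cont d (T : measurableType d) (R : realType)
  (AA BB : set (set T -> \bar R)) : Prop :=
  forall mu, AA mu -> exists2 nu, BB nu & abs_cont mu nu.

Definition sconv d (T : measurableType d) (R : realType)
  (QQ : set (set T -> \bar R)) : set (set T -> \bar R) :=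
  [set nu | exists (c : nat -> R) (Qn : nat -> (set T -> \bar R)),
     (forall n, QQ (Qn n)) /\ (forall n, 0 <= c n) /\
     (\sum_(n <oo) (c n)%:E = 1)%E /\
     (forall A, nu A = \sum_(n <oo) ((c n)%:E * Qn n A))%E ].

Definition fam d (T : measurableType d) (R : realType)
  (PP : set (probability T R)) : set (set T -> \bar R) :=
  (fun p : probability T R => (p : set T -> \bar R)) @` PP.

Definition pre_Hahn_localization d (T : measurableType d) (R : realType)
  (PP QQ : set (probability T R)) (S : probability T R -> set T) : Prop :=
  (forall q, QQ q -> measurable (S q)) /\
  (forall q, QQ q -> q (S q) = 1%E) /\
  (forall q r, QQ q -> QQ r -> q <> r -> q (S r) = 0%E) /\
  fam_abs_cont (fam QQ) (fam PP) /\
  fam_abs_cont (fam PP) (sconv (fam QQ)).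

Definition Hahn_extension d (T : measurableType d) (R : realType)
  (QQ : set (probability T R)) (S : probability T R -> set T) : set (set T) :=
  <<s measurable `|`
      [set \bigcup_(q in QQ) E q | E in
         [set E : probability T R -> set T |
            forall q, QQ q -> measurable (E q) /\ E q `<=` S q]] >>.

(* Main.v *)
Require Import Defs.
From HB Require Import structures.
From mathcomp Require Import all_boot all_order all_algebra.
From mathcomp Require Import all_classical all_reals all_analysis.
Local Open Scope classical_set_scope.

Theorem lemma4p2 (d : measure_display) (T : measurableType d) (R : realType)
  (PP QQ : set (probability T R)) (S : probability T R -> set T) :
  pre_Hahn_localization PP QQ S ->
  (forall q r, QQ q -> QQ r -> q <> r -> S q `&` S r = set0) ->
  forall A, Hahn_extension QQ S A ->
  forall q, QQ q -> measurable (A `&` S q).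
Proof.
move=> [mS _] disj A HA q Qq.
pose H := [set B : set T | forall q, QQ q -> measurable (B `&` S q)].
suff : Hahn_extension QQ S `<=` H by move=> /(_ A HA q Qq).
apply: smallest_sub.
- split.
  + by move=> r _; rewrite set0I; exact: measurable0.
  + move=> B HB r Qr.
    have -> : (setT `\` B) `&` S r = S r `\` (B `&` S r).
      apply/seteqP; split => x /=.
      * by move=> [[_ nB] Sx]; split => // -[].
      * by move=> [Sx nBS]; split => //; split => // Bx; apply: nBS.
    exact: measurableD (mS r Qr) (HB r Qr).
  + move=> F HF r Qr; rewrite setI_bigcupl.
    by apply: bigcupT_measurable => n; exact: HF.
- move=> B [mB|[E HE <-]] r Qr.
  + exact: measurableI mB (mS r Qr).
  + have -> : (\bigcup_(p in QQ) E p) `&` S r = E r.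
      apply/seteqP; split => x /=.
      * move=> [[p Qp Ex] Sx].
        case: (pselect (p = r)) => [<-//|npr].
        have := disj p r Qp Qr npr.
        move/seteqP => [/(_ x) h _]; exfalso; apply: h; split => //.
        by have [_ /(_ x Ex)] := HE p Qp.
      * move=> Ex; split; first by exists r.
        by have [_ /(_ x Ex)] := HE r Qr.
    by have [] := HE r Qr.
Qed.
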